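(* Let $G$ be a connected graph with $|V(G)|\ge 3$ and $L(G)=2l(G)$, and let $F_L,F_l$ be maximum matchings of $G$ with $\nu(G\setminus F_L)=L(G)$ and $\nu(G\setminus F_l)=l(G)$. Then for any maximum matching $H_L$ of $G\setminus F_L$, no edge of $F_L\cap F_l$ is adjacent to two edges of $H_L$.
   Context: Graphs are finite, undirected, without loops or multiple edges. $\nu(G)$ denotes the maximum size of a matching of $G$; a matching is maximum if it has $\nu(G)$ edges. For $F\subseteq E(G)$, $G\setminus F$ is the graph with vertex set $V(G)$ and edge set $E(G)\setminus F$. Two distinct edges are adjacent if they share an endpoint. Define $L(G)=\max\{\nu(G\setminus F): F \text{ a maximum matching of } G\}$ and $l(G)=\min\{\nu(G\setminus F): F \text{ a maximum matching of } G\}$. *)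

(* Defs.v *)
(* A finite simple graph is a symmetric irreflexive relation
   e on a finType T; an edge is the 2-element set {x,y} with e x y. *)
From mathcomp Require Import all_boot.
Set Implicit Arguments. Unset Strict Implicit. Unset Printing Implicit Defensive.

Section Graphs.
Variable T : finType.

Definition simple_graph (e : rel T) : Prop := symmetric e /\ irreflexive e.

Definition edges (e : rel T) : {set {set T}} :=
  [set [set x; y] | x in T, y in T & e x y].

Definition matching (S M : {set {set T}}) : bool :=
  (M \subset S) && trivIset M.

Definition nu (S : {set {set T}}) : nat :=
  \max_(M : {set {set T}} | matching S M) #|M|.

Definition max_matching (S M : {set {set T}}) : bool :=
  matching S M && (#|M| == nu S).

(* L(G) and l(G); G \ F has edge set E(G) :\: F. *)
Definition Lg (e : rel T) : nat :=
  \max_(F : {set {set T}} | max_matching (edges e) F) nu (edges e :\: F).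

(* the set of maximum matchings is nonempty, so the default #|T| is never
   attained as a spurious value (nu <= #|T|). *)
Definition lg (e : rel T) : nat :=
  \big[minn/#|T|]_(F : {set {set T}} | max_matching (edges e) F) nu (edges e :\: F).

Definition adjacent (f g : {set T}) : bool := (f != g) && (f :&: g != set0).

Definition connected (e : rel T) : Prop := forall x y : T, connect e x y.

End Graphs.

(* Main.v *)
Require Import Defs.
From mathcomp Require Import all_boot.
From Stdlib Require Import Lia.
Set Implicit Arguments. Unset Strict Implicit. Unset Printing Implicit Defensive.

Section H.
Variable T : finType.
Implicit Types (A B : {set T}) (S M P : {set {set T}}).

Lemma disjP A B : reflect (forall x, x \in A -> x \in B -> False) [disjoint A & B].
Proof.
rewrite -setI_eq0; apply: (iffP eqP) => [H x xA xB|H].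
  have : x \in A :&: B by rewrite inE xA xB.
  by rewrite H inE.
by apply/setP=> x; rewrite !inE; apply/negbTE/negP => /andP[] /H H1 /H1.
Qed.

Lemma triv_disj P A B x : trivIset P -> A \in P -> B \in P -> x \in A -> x \in B -> A = B.
Proof.
move=> /trivIsetP tP AP BP xA xB; apply/eqP; apply/negPn/negP => nAB.
by move/disjP: (tP _ _ AP BP nAB) => /(_ x xA xB).
Qed.

Lemma matching_le S M : matching S M -> #|M| <= nu S.
Proof. by move=> mM; rewrite /nu; apply: (@leq_bigmax_cond _ (fun M => matching S M) (fun M => #|M|)). Qed.

Lemma matching_union S M1 M2 : matching S M1 -> matching S M2 ->
  (forall g h, g \in M1 -> h \in M2 -> [disjoint g & h]) -> matching S (M1 :|: M2).
Proof.
move=> /andP[s1 t1] /andP[s2 t2] H; apply/andP; split; first by rewrite subUset s1 s2.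
apply/trivIsetP => A B /setUP[AP|AP] /setUP[BP|BP] nAB.
- by move/trivIsetP: t1; apply.
- exact: H.
- by rewrite disjoint_sym; apply: H.
- by move/trivIsetP: t2; apply.
Qed.

Lemma matching_sub S M M' : M' \subset M -> matching S M -> matching S M'.
Proof.
move=> sM /andP[s t]; apply/andP; split; first exact: subset_trans sM s.
exact: trivIsetS sM t.
Qed.

Lemma matching1 S g : g \in S -> matching S [set g].
Proof. by move=> gS; apply/andP; split; [rewrite sub1set | exact: trivIset1]. Qed.

End H.

Lemma ar1 a b c l : a + b = 2*l -> a <= c -> c <= l -> b <= l -> b = l /\ c = l.
Proof. rewrite -plusE -multE. move=> h /leP h1 /leP h2 /leP h3; split; lia. Qed.

Lemma ar2 hl k k' d m2 cb c m1 l : hl = 2 * l -> m2 = l -> m1 = l ->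
  hl + k' <= k + m2 -> k = k' + d -> d <= cb -> c = 1 + cb -> c <= m1 -> False.
Proof.
rewrite -!plusE -multE => h1 h2 h3 /leP h4 h5 /leP h6 h7 /leP h8; lia.
Qed.

Lemma edgeP (T : finType) (e : rel T) g : g \in edges e -> exists x y, g = [set x; y].
Proof. case/imset2P => x y _ _ ->. by exists x, y. Qed.

Theorem claim4 (T : finType) (e : rel T) (FL Fl : {set {set T}}) :
  simple_graph e -> connected e -> 3 <= #|T| ->
  Lg e = 2 * lg e ->
  max_matching (edges e) FL -> nu (edges e :\: FL) = Lg e ->
  max_matching (edges e) Fl -> nu (edges e :\: Fl) = lg e ->
  forall HL : {set {set T}}, max_matching (edges e :\: FL) HL ->
  forall f, f \in FL :&: Fl ->
    ~ (exists g1 g2, [/\ g1 \in HL, g2 \in HL, g1 != g2,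
                         adjacent f g1 & adjacent f g2]).
Proof.
move=> _ _ _ HLl mFL nuL mFl nul HL mHL f fK [g1 [g2 [g1H g2H ng12 af1 af2]]].
move: mFL mFl mHL => /andP[maFL /eqP cFL] /andP[maFl /eqP cFl] /andP[maHL /eqP cHL].
have [sFL tFL] := andP maFL.
have [sFl tFl] := andP maFl.
have [sHL tHL] := andP maHL.
rewrite nuL HLl in cHL.
set l := lg e in cHL nul.
set S := edges e in sFL sFl sHL cFL cFl nul cHL maFL maFl maHL.
set K := FL :&: Fl in fK *.
set M1 := HL :\: Fl.
set M2 := FL :\: Fl.
have HLS : forall g, g \in HL -> (g \in S) /\ (g \notin FL).
  by move=> g gH; move: (subsetP sHL g gH); rewrite inE => /andP[-> ->].
have cM2 : #|M2| = #|Fl :\: FL|.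
  have h1 := cardsID Fl FL; have h2 := cardsID FL Fl.
  apply/eqP; rewrite -(eqn_add2l #|FL :&: Fl|) h1 setIC h2 cFL cFl //.
have mM2 : matching (S :\: Fl) M2.
  apply/andP; split; last exact: trivIsetS (subsetDl _ _) tFL.
  apply/subsetP => g; rewrite !inE => /andP[-> gFL] /=; exact: subsetP sFL g gFL.
have mM1 : matching (S :\: Fl) M1.
  apply/andP; split; last exact: trivIsetS (subsetDl _ _) tHL.
  apply/subsetP => g; rewrite !inE => /andP[-> gH] /=; by case: (HLS g gH).
have M2le : #|M2| <= l by rewrite -nul; apply: matching_le.
have M1le : #|M1| <= l by rewrite -nul; apply: matching_le.
have Nle : #|HL :&: Fl| <= #|Fl :\: FL|.
  apply: subset_leq_card; apply/subsetP => g; rewrite !inE => /andP[gH ->].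
  by case: (HLS g gH) => _ ->.
have [M1eq M2eq] : #|M1| = l /\ #|M2| = l.
  have h := cardsID Fl HL; rewrite cHL in h.
  have [] := ar1 h (leq_trans Nle (eq_leq (esym cM2))) M2le M1le.
  by [].
set K' := [set h in K | [forall g in HL, [disjoint h & g]]].
have sK'K : K' \subset K by apply/subsetP => h; rewrite inE => /andP[].
have sKFL : K \subset FL by apply: subsetIl.
have mU : matching S (HL :|: K').
  apply: matching_union.
  - apply/andP; split => //; apply/subsetP => g gH; by case: (HLS g gH).
  - apply: (matching_sub (subset_trans sK'K sKFL) maFL).
  - move=> g h gH; rewrite inE => /andP[_ /forallP /(_ g)]; rewrite gH /=.
    by rewrite disjoint_sym.
have cap0 : HL :&: K' = set0.
  apply/setP => g; rewrite in_setI in_set0; apply/negbTE/negP => /andP[gH gK'].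
  have := subsetP (subset_trans sK'K sKFL) g gK'; by case: (HLS g gH) => _ /negP.
have cU : #|HL :|: K'| = #|HL| + #|K'|.
  by have := cardsUI HL K'; rewrite cap0 cards0 addn0.
have le1 : #|HL| + #|K'| <= #|K| + #|M2|.
  by rewrite -cU (cardsID Fl FL) cFL; apply: matching_le.
have cK : #|K| = #|K'| + #|K :\: K'|.
  by rewrite -(cardsID K' K) (setIidPr sK'K).
move: af1 => /andP[nf1 /set0Pn [a]]; rewrite inE => /andP[af ag1].
move: af2 => /andP[nf2 /set0Pn [b]]; rewrite inE => /andP[bf bg2].
have tK : trivIset K := trivIsetS sKFL tFL.
have inM1 : forall h g v, h \in K -> g \in HL -> v \in h -> v \in g -> g \in M1.
  move=> h g v hK gH vh vg; rewrite inE gH andbT; apply/negP => gFl.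
  have hg := triv_disj tFl (subsetP (subsetIr _ _) h hK) gFl vh vg.
  case: (HLS g gH) => _; rewrite -hg => /negP; apply; exact: subsetP sKFL h hK.
have nab : a != b.
  apply/negP => /eqP ab; move: ng12 => /negP; apply; apply/eqP.
  by apply: (triv_disj tHL g1H g2H ag1); rewrite ab.
set C := cover M1 :&: cover K.
have inC : forall h g v, h \in K -> g \in M1 -> v \in h -> v \in g -> v \in C.
  move=> h g v hK gM vh vg; rewrite inE; apply/andP; split; apply/bigcupP.
  - by exists g.
  - by exists h.
have aC : a \in C by apply: (inC f g1) => //; apply: (inM1 f g1 a).
have bC : b \in C by apply: (inC f g2) => //; apply: (inM1 f g2 b).
have sub1 : K :\: K' \subset pblock K @: (C :\ b).
  apply/subsetP => h; rewrite in_setD => /andP[hnK' hK].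
  have : ~~ [forall g in HL, [disjoint h & g]].
    by apply: contra hnK' => H; rewrite inE hK H.
  rewrite negb_forall => /existsP [g]; rewrite negb_imply => /andP[gH].
  rewrite -setI_eq0 => /set0Pn [v]; rewrite inE => /andP[vh vg].
  have vC : v \in C by apply: (inC h g) => //; apply: (inM1 h g v).
  case: (eqVneq v b) => [vb | nvb].
  - have hf : h = f by apply: (triv_disj tK hK fK vh); rewrite vb.
    apply/imsetP; exists a; first by rewrite in_setD1 nab aC.
    by rewrite (def_pblock tK fK af) hf.
  - apply/imsetP; exists v; first by rewrite in_setD1 nvb vC.
    by rewrite (def_pblock tK hK vh).
have le2 : #|K :\: K'| <= #|C :\ b|.
  exact: leq_trans (subset_leq_card sub1) (leq_imset_card _ _).
have cCb : #|C| = 1 + #|C :\ b| by rewrite (cardsD1 b C) bC.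
have meetM2 : forall g, g \in M1 -> exists2 z, z \in g & z \in cover M2.
  move=> g gM1.
  case: (boolP [exists z, (z \in g) && (z \in cover M2)]).
    by move=> /existsP [z /andP[zg zc]]; exists z.
  rewrite negb_exists => /forallP Hz; exfalso.
  have gS' : g \in S :\: Fl.
    move: gM1; rewrite !inE => /andP[-> gH] /=; by case: (HLS g gH).
  have gnM2 : g \notin M2.
    move: gM1; rewrite !inE => /andP[_ gH]; case: (HLS g gH) => _ /negbTE ->.
    by rewrite andbF.
  have mm : matching (S :\: Fl) (g |: M2).
    apply: matching_union (matching1 gS') mM2 _.
    move=> g' h; rewrite inE => /eqP -> hM2; apply/disjP => z zg zh.
    move: (Hz z); rewrite zg /=; apply/negP/negPn; apply/bigcupP; by exists h.
  have := matching_le mm; rewrite cardsU1 gnM2 M2eq -nul.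
  by rewrite add1n ltnn.
have le3 : #|C| <= #|M1|.
  have sub2 : pblock M1 @: C \subset M1.
    apply/subsetP => g /imsetP [v vC ->]; apply: pblock_mem.
    by move: vC; rewrite inE => /andP[].
  have inj : {in C &, injective (pblock M1)}.
    move=> v w vC wC eqvw.
    have vM : v \in cover M1 by move: vC; rewrite inE => /andP[].
    have vK : v \in cover K by move: vC; rewrite inE => /andP[].
    have wM : w \in cover M1 by move: wC; rewrite inE => /andP[].
    have wK : w \in cover K by move: wC; rewrite inE => /andP[].
    have gM1 := pblock_mem vM.
    have vg : v \in pblock M1 v by rewrite mem_pblock.
    have wg : w \in pblock M1 v by rewrite eqvw mem_pblock.
    have [z zg zM2] := meetM2 _ gM1.
    have zK : forall u, u \in cover K -> z != u.
      move=> u uK; apply/eqP => zu; move: zM2 uK; rewrite -zu.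
      move=> /bigcupP [m mmM2 zm] /bigcupP [k kK zk].
      have mk := triv_disj tFL (subsetP (subsetDl _ _) m mmM2)
                           (subsetP sKFL k kK) zm zk.
      move: mmM2; rewrite mk inE => /andP[/negP Hk _]; apply: Hk.
      exact: subsetP (subsetIr _ _) k kK.
    have gS : pblock M1 v \in S.
      by move: gM1; rewrite inE => /andP[_ gH]; case: (HLS _ gH).
    have [x [y exy]] := edgeP gS.
    move: vg wg zg (zK v vK) (zK w wK); rewrite exy !inE.
    by case/orP => /eqP -> ; case/orP => /eqP -> ; case/orP => /eqP -> ;
       rewrite ?eqxx.
  rewrite -(card_in_imset inj); exact: subset_leq_card sub2.
apply: (ar2 cHL M2eq M1eq le1 cK le2 cCb le3).
Qed.
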